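(* Fix two distinct decimal digits $d_1 \neq d_2$ in $\{0,1,\dots,9\}$. For integers $i \ge 1$ and $k_1, k_2 \ge 0$, let $S(i,k_1,k_2)$ be the set of positive integers whose base-10 representation has exactly $i$ digits (no leading zeros) and contains exactly $k_1$ occurrences of the digit $d_1$ and exactly $k_2$ occurrences of the digit $d_2$; set $S(i,k_1,k_2)=\emptyset$ if $k_1<0$ or $k_2<0$. For integers $j \ge 1$ define $$t(i,j,k_1,k_2) = \sum_{x \in S(i,k_1,k_2)} \frac{1}{x^j}$$ (an empty sum being $0$). Then for all integers $i\ge 1$, $j \ge 1$, $k_1,k_2 \ge 0$: $$t(i+1,j,k_1,k_2) = \sum_{n=0}^{\infty} (-1)^n \binom{j+n-1}{n} \frac{1}{10^{j+n}} \Big[ d_1^{\,n}\, t(i,j+n,k_1-1,k_2) + d_2^{\,n}\, t(i,j+n,k_1,k_2-1) + \Big(\sum_{\substack{d\in\{0,\dots,9\}\\ d\ne d_1,\, d\ne d_2}} d^{\,n}\Big) t(i,j+n,k_1,k_2) \Big],$$ where $0^0$ is interpreted as $1$, and the series on the right converges.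
   Context: All integers are written in base 10. The three terms in the bracket correspond to the decomposition $S(i+1,k_1,k_2) = \{10x+d_1 : x\in S(i,k_1-1,k_2)\} \cup \{10x+d_2 : x \in S(i,k_1,k_2-1)\} \cup \{10x+d : x\in S(i,k_1,k_2),\ d\in\{0,\dots,9\}\setminus\{d_1,d_2\}\}$. *)

(* Defs.v *)
From Stdlib Require Import Reals ZArith Arith List Bool.
From Coquelicot Require Import Coquelicot.
Open Scope R_scope.

Definition digit (x m : nat) : nat := ((x / 10 ^ m) mod 10)%nat.

Definition count_digit (i x d : nat) : nat :=
  length (filter (fun m => Nat.eqb (digit x m) d) (seq 0 i)).

(* membership in S(i,k1,k2): exactly i digits (10^(i-1) <= x < 10^i),
   exactly k1 digits equal to d1 and k2 digits equal to d2.
   k1, k2 are integers; negative values give the empty set. *)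
Definition inS (d1 d2 i : nat) (k1 k2 : Z) (x : nat) : bool :=
  (Nat.leb (10 ^ (i - 1)) x) && (Nat.ltb x (10 ^ i)) &&
  Z.eqb (Z.of_nat (count_digit i x d1)) k1 &&
  Z.eqb (Z.of_nat (count_digit i x d2)) k2.

Definition S_list (d1 d2 i : nat) (k1 k2 : Z) : list nat :=
  filter (inS d1 d2 i k1 k2) (seq (10 ^ (i - 1)) (10 ^ i - 10 ^ (i - 1))).

Definition t (d1 d2 i j : nat) (k1 k2 : Z) : R :=
  fold_right Rplus 0 (map (fun x => / (INR x ^ j)) (S_list d1 d2 i k1 k2)).

Definition other_digit_powsum (d1 d2 n : nat) : R :=
  fold_right Rplus 0
    (map (fun d => INR d ^ n)
       (filter (fun d => negb (Nat.eqb d d1) && negb (Nat.eqb d d2)) (seq 0 10))).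

(* Main.v *)
Require Import Defs.
From Stdlib Require Import Reals ZArith Arith List Bool Lia Lra.
From Coquelicot Require Import Coquelicot.
Open Scope R_scope.

Lemma hockey (k n : nat) :
  sum_f_R0 (fun m => Binomial.C (k + m) m) n = Binomial.C (S k + n) n.
Proof.
  induction n as [|n IH].
  - simpl. rewrite Nat.add_0_r. unfold Binomial.C.
    replace (k - 0)%nat with k by lia. replace (S k - 0)%nat with (S k) by lia.
    simpl (fact 0). assert (H1 := INR_fact_neq_0 k). assert (H2 := INR_fact_neq_0 (S k)). simpl INR. field; auto.
  - simpl sum_f_R0. rewrite IH.
    replace (S k + S n)%nat with (S (k + S n)) by lia.
    replace (S k + n)%nat with (k + S n)%nat by lia.
    apply pascal. lia.
Qed.

Lemma NB (k : nat) : forall z, Rabs z < 1 ->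
  is_series (fun n => Binomial.C (k + n) n * z ^ n) (/ (1 - z) ^ (S k)).
Proof.
  induction k as [|k IH]; intros z Hz.
  - eapply is_series_ext; [|rewrite pow_1; apply is_series_geom; exact Hz].
    intro n. simpl. rewrite C_n_n. ring.
  - assert (Hg := is_series_geom z Hz).
    assert (H1 := IH z Hz).
    assert (Ha : ex_series (fun n => Rabs (Binomial.C (k + n) n * z ^ n))).
    { exists (/ (1 - Rabs z) ^ S k).
      eapply is_series_ext; [|apply IH; rewrite Rabs_Rabsolu; exact Hz].
      intro n. rewrite Rabs_mult, RPow_abs. f_equal. symmetry. apply Rabs_pos_eq.
      unfold Binomial.C. apply Rmult_le_pos; [apply pos_INR|].
      left. apply Rinv_0_lt_compat. apply Rmult_lt_0_compat; apply lt_0_INR, lt_O_fact. }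
    assert (Hb : ex_series (fun n => Rabs (z ^ n))).
    { exists (/ (1 - Rabs z)).
      eapply is_series_ext; [|apply is_series_geom; rewrite Rabs_Rabsolu; exact Hz].
      intro n. rewrite RPow_abs. reflexivity. }
    assert (H := is_series_mult _ _ _ _ H1 Hg Ha Hb).
    assert (Hz1 : 1 - z <> 0) by (apply Rabs_def2 in Hz; lra).
    replace (/ (1 - z) ^ S (S k)) with (/ (1 - z) ^ S k * / (1 - z)).
    2:{ simpl. field. split; [|exact Hz1]. apply pow_nonzero. exact Hz1. }
    eapply is_series_ext; [|exact H].
    intro n. simpl.
    rewrite (sum_eq _ (fun m => Binomial.C (k + m) m * z ^ n)).
    + rewrite <- scal_sum. rewrite hockey. simpl. ring.
    + intros m Hm. rewrite Rmult_assoc, <- pow_add. f_equal. f_equal. lia.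
Qed.

Lemma termA (y d j : nat) : (1 <= y)%nat -> (d < 10)%nat -> (1 <= j)%nat ->
  is_series (fun n => (-1) ^ n * Binomial.C (j + n - 1) n / 10 ^ (j + n) * (INR d ^ n * / INR y ^ (j + n)))
    (/ INR (10 * y + d) ^ j).
Proof.
  intros Hy Hd Hj.
  destruct j as [|k]; [lia|].
  set (Y := INR y). set (D := INR d).
  assert (HY : 1 <= Y) by (apply (le_INR 1); exact Hy).
  assert (HD0 : 0 <= D) by apply pos_INR.
  assert (HD : D <= 9) by (unfold D; replace 9 with (INR 9) by (simpl; ring); apply le_INR; lia).
  set (z := - (D / (10 * Y))).
  assert (Hz : Rabs z < 1).
  { unfold z. rewrite Rabs_Ropp. rewrite Rabs_pos_eq.
    - apply Rmult_lt_reg_r with (10 * Y); [lra|]. unfold Rdiv. rewrite Rmult_assoc, Rinv_l; lra.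
    - unfold Rdiv. apply Rmult_le_pos; [lra|]. left; apply Rinv_0_lt_compat; lra. }
  assert (H := NB k z Hz).
  apply (is_series_scal (/ (10 * Y) ^ S k)) in H.
  eapply is_series_ext; [|replace (/ INR (10 * y + d) ^ S k) with (scal (/ (10 * Y) ^ S k) (/ (1 - z) ^ S k)); [exact H|]].
  - intro n. unfold scal; simpl; unfold mult; simpl.
    replace (S k + n - 1)%nat with (k + n)%nat by lia.
    unfold z. replace (- (D / (10 * Y))) with ((-1) * D * / 10 * / Y) by (field; lra).
    rewrite !Rpow_mult_distr, !pow_inv, pow_add, pow_add.
    replace (k + n - 0)%nat with (k + n)%nat by lia.
    field. repeat split; try apply pow_nonzero; try lra.
  - rewrite (plus_INR (10*y) d), (mult_INR 10 y).
    change (scal (/ (10 * Y) ^ S k) (/ (1 - z) ^ S k)) with (/ (10 * Y) ^ S k * / (1 - z) ^ S k).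
    fold Y D. unfold z.
    replace (INR 10) with 10 by (simpl; ring).
    replace (1 - - (D / (10 * Y))) with ((10 * Y + D) * / (10 * Y)) by (field; lra).
    rewrite (Rpow_mult_distr (10 * Y + D)), (pow_inv (10 * Y)).
    assert (HA : 10 * Y + D <> 0) by lra.
    assert (P1 := pow_nonzero (10*Y) (S k) ltac:(lra)). assert (P2 := pow_nonzero _ (S k) HA). match goal with |- ?a = ?b => change (@eq R a b) end. field; auto.
Qed.


Definition sumR {A} (l : list A) (f : A -> R) : R := fold_right Rplus 0 (map f l).

Lemma sumR_filter {A} (P : A -> bool) (f : A -> R) l :
  fold_right Rplus 0 (map f (filter P l)) = sumR l (fun x => if P x then f x else 0).
Proof. unfold sumR. induction l as [|x l IH]; simpl; auto. destruct (P x); simpl; rewrite IH; ring. Qed.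

Lemma sumR_app {A} (f : A -> R) l1 l2 : sumR (l1 ++ l2) f = sumR l1 f + sumR l2 f.
Proof. induction l1; unfold sumR in *; simpl; [ring|rewrite IHl1; ring]. Qed.

Lemma sumR_flat_map {A B} (g : A -> list B) (f : B -> R) l :
  sumR (flat_map g l) f = sumR l (fun y => sumR (g y) f).
Proof. induction l; simpl; [reflexivity|]. rewrite sumR_app, IHl. reflexivity. Qed.

Lemma sumR_map {A B} (h : A -> B) (f : B -> R) l : sumR (map h l) f = sumR l (fun x => f (h x)).
Proof. unfold sumR. rewrite map_map. reflexivity. Qed.

Lemma sumR_ext_in {A} (f g : A -> R) l : (forall x, In x l -> f x = g x) -> sumR l f = sumR l g.
Proof. induction l; intros H; simpl; [reflexivity|]. unfold sumR in *; simpl.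
  rewrite H by (left; reflexivity). rewrite IHl; auto. intros; apply H; right; auto. Qed.

Lemma sumR_lin3 {A} (f g h : A -> R) a b c l :
  sumR l (fun x => a * f x + b * g x + c * h x) = a * sumR l f + b * sumR l g + c * sumR l h.
Proof. induction l; unfold sumR in *; simpl; [ring|rewrite IHl; ring]. Qed.

Lemma sumR_scal {A} (f : A -> R) c l : sumR l (fun x => c * f x) = c * sumR l f.
Proof. induction l; unfold sumR in *; simpl; [ring|rewrite IHl; ring]. Qed.

Lemma sumR_zero {A} (l : list A) : sumR l (fun _ => 0) = 0.
Proof. induction l; unfold sumR in *; simpl; [ring|rewrite IHl; ring]. Qed.

Lemma sumR_split {A} (P : A -> bool) f l :
  sumR l f = sumR (filter P l) f + sumR (filter (fun x => negb (P x)) l) f.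
Proof. induction l; unfold sumR in *; simpl; [ring|]. destruct (P a); simpl; rewrite IHl; ring. Qed.

Lemma is_series_zero : is_series (fun _ : nat => 0) 0.
Proof. unfold is_series. eapply filterlim_ext; [|apply filterlim_const].
  intro n. simpl. rewrite sum_n_const. simpl. ring. Qed.

Lemma is_series_sumR {A} (l : list A) (f : A -> nat -> R) (s : A -> R) :
  (forall x, In x l -> is_series (f x) (s x)) ->
  is_series (fun n => sumR l (fun x => f x n)) (sumR l s).
Proof.
  induction l as [|x l IH]; intros H.
  - apply is_series_zero.
  - unfold sumR; simpl.
    apply (is_series_plus (f x) (fun n => sumR l (fun x => f x n))).
    + apply H; left; auto.
    + apply IH. intros; apply H; right; auto.
Qed.

Lemma map_add_seq s k n : map (Nat.add s) (seq k n) = seq (s + k) n.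
Proof. revert k; induction n; intros k; simpl; [reflexivity|]. rewrite IHn. f_equal. f_equal. lia. Qed.

Lemma seq_flat a N : seq (10 * a)%nat (10 * N)%nat =
  flat_map (fun y => map (fun d => (10 * y + d)%nat) (seq 0 10)) (seq a N).
Proof.
  revert a; induction N; intros a.
  - rewrite Nat.mul_0_r. reflexivity.
  - replace (10 * S N)%nat with (10 + 10 * N)%nat by lia.
    rewrite seq_app. simpl seq at 3. simpl flat_map.
    replace (10 * a + 10)%nat with (10 * S a)%nat by lia. rewrite IHN.
    f_equal. rewrite <- (Nat.add_0_r (10 * a)) at 1. rewrite <- map_add_seq. reflexivity.
Qed.

Lemma length_filter_map (P : nat -> bool) l :
  length (filter P (map S l)) = length (filter (fun m => P (S m)) l).
Proof. induction l; simpl; auto. destruct (P (S a)); simpl; auto. Qed.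

Lemma count_step i y d c : (d < 10)%nat ->
  count_digit (S i) (10 * y + d)%nat c = ((if Nat.eqb d c then 1 else 0) + count_digit i y c)%nat.
Proof.
  intros Hd. unfold count_digit.
  change (seq 0 (S i)) with (0%nat :: seq 1 i).
  rewrite <- seq_shift.
  assert (H0 : digit (10 * y + d) 0 = d).
  { unfold digit. rewrite Nat.pow_0_r, Nat.div_1_r. rewrite Nat.add_comm, Nat.mul_comm, Nat.Div0.mod_add. apply Nat.mod_small; lia. }
  remember (10 * y + d)%nat as x eqn:Hx. simpl filter. rewrite H0. subst x.
  assert (E : filter (fun m => Nat.eqb (digit (10 * y + d) m) c) (map S (seq 0 i)) =
              map S (filter (fun m => Nat.eqb (digit y m) c) (seq 0 i))).
  { induction (seq 0 i) as [|m l IH]; cbn [map filter]; auto.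
    replace (digit (10 * y + d) (S m)) with (digit y m).
    2:{ unfold digit.
    rewrite Nat.pow_succ_r', <- Nat.Div0.div_div.
    replace ((10 * y + d) / 10)%nat with y. reflexivity.
    rewrite Nat.add_comm, Nat.mul_comm, Nat.div_add by lia. rewrite Nat.div_small by lia. reflexivity. }
    destruct (digit y m =? c); cbn [map]; rewrite IH; reflexivity. }
  rewrite E. destruct (Nat.eqb d c); simpl; rewrite length_map; reflexivity.
Qed.
Lemma Zeqb_shift (b x : nat) K :
  Z.eqb (Z.of_nat (b + x)) K = Z.eqb (Z.of_nat x) (K - Z.of_nat b).
Proof. destruct (Z.eqb_spec (Z.of_nat (b + x)) K); destruct (Z.eqb_spec (Z.of_nat x) (K - Z.of_nat b)); lia. Qed.

Lemma inS_step d1 d2 i K1 K2 y d : (1 <= i)%nat -> (10 ^ (i - 1) <= y < 10 ^ i)%nat -> (d < 10)%nat ->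
  inS d1 d2 (i + 1) K1 K2 (10 * y + d)%nat =
  inS d1 d2 i (K1 - Z.of_nat (if Nat.eqb d d1 then 1 else 0)) (K2 - Z.of_nat (if Nat.eqb d d2 then 1 else 0)) y.
Proof.
  intros Hi Hy Hd. unfold inS.
  rewrite Nat.add_sub. rewrite Nat.add_1_r, !count_step by exact Hd.
  rewrite !Zeqb_shift.
  assert (E1 : Nat.leb (10 ^ i) (10 * y + d) = true).
  { apply Nat.leb_le. destruct i as [|i]; [lia|]. rewrite Nat.pow_succ_r'.
    replace (S i - 1)%nat with i in Hy by lia. lia. }
  assert (E2 : Nat.ltb (10 * y + d) (10 ^ S i) = true).
  { apply Nat.ltb_lt. rewrite (Nat.pow_succ_r' 10 i). lia. }
  destruct i as [|i]; [lia|]. replace (S i - 1)%nat with i in * by lia.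
  assert (E3 : Nat.leb (10 ^ i) y = true) by (apply Nat.leb_le; lia).
  assert (E4 : Nat.ltb y (10 ^ S i) = true) by (apply Nat.ltb_lt; lia).
  rewrite E1, E2, E3, E4. reflexivity.
Qed.

Lemma filter_and (P Q : nat -> bool) l :
  filter Q (filter P l) = filter (fun x => P x && Q x) l.
Proof. induction l; simpl; auto. destruct (P a); simpl; auto. destruct (Q a); simpl; rewrite IHl; auto. Qed.

Lemma digits_split d1 d2 (g : nat -> R) : (d1 < 10)%nat -> (d2 < 10)%nat -> d1 <> d2 ->
  sumR (seq 0 10) g = g d1 + g d2 +
    sumR (filter (fun d => negb (Nat.eqb d d1) && negb (Nat.eqb d d2)) (seq 0 10)) g.
Proof.
  intros H1 H2 H12.
  rewrite (sumR_split (fun d => Nat.eqb d d1)).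
  rewrite (sumR_split (fun d => Nat.eqb d d2) _ (filter (fun x => negb (Nat.eqb x d1)) (seq 0 10))).
  rewrite !filter_and.
  assert (F1 : filter (fun d => Nat.eqb d d1) (seq 0 10) = d1 :: nil).
  { clear H2 H12. do 10 (destruct d1 as [|d1]; [reflexivity|]); lia. }
  assert (F2 : filter (fun x => negb (Nat.eqb x d1) && Nat.eqb x d2) (seq 0 10) = d2 :: nil).
  { do 10 (destruct d1 as [|d1]; [do 10 (destruct d2 as [|d2]; [first [reflexivity | lia] |]); lia |]); lia. }
  rewrite F1, F2. unfold sumR; simpl. ring.
Qed.

Theorem mainTheorem1 :
  forall (d1 d2 i j k1 k2 : nat),
    (d1 < 10)%nat -> (d2 < 10)%nat -> d1 <> d2 ->
    (1 <= i)%nat -> (1 <= j)%nat ->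
    is_series
      (fun n : nat =>
         (-1) ^ n * Binomial.C (j + n - 1) n / 10 ^ (j + n) *
         (INR d1 ^ n * t d1 d2 i (j + n) (Z.of_nat k1 - 1) (Z.of_nat k2)
          + INR d2 ^ n * t d1 d2 i (j + n) (Z.of_nat k1) (Z.of_nat k2 - 1)
          + other_digit_powsum d1 d2 n * t d1 d2 i (j + n) (Z.of_nat k1) (Z.of_nat k2)))
      (t d1 d2 (i + 1) j (Z.of_nat k1) (Z.of_nat k2)).
Proof.
  intros d1 d2 i j k1 k2 Hd1 Hd2 Hne Hi Hj.
  set (K1 := Z.of_nat k1). set (K2 := Z.of_nat k2).
  set (p := (10 ^ (i - 1))%nat).
  assert (Hp : (1 <= p)%nat) by (pose proof (Nat.pow_nonzero 10 (i - 1)); unfold p; lia).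
  assert (Hpi : (10 ^ i = 10 * p)%nat).
  { unfold p. destruct i as [|i']; [lia|]. rewrite Nat.pow_succ_r'. f_equal. f_equal. lia. }
  assert (HY : forall y, In y (seq p (10 ^ i - p)) -> (p <= y < 10 ^ i)%nat).
  { intros y Hy. apply in_seq in Hy. lia. }
  assert (HLHS : t d1 d2 (i + 1) j K1 K2 =
    sumR (seq p (10 ^ i - p)) (fun y => sumR (seq 0 10) (fun d =>
      if inS d1 d2 (i + 1) K1 K2 (10 * y + d) then / INR (10 * y + d) ^ j else 0))).
  { unfold t, S_list. rewrite sumR_filter. rewrite Nat.add_sub.
    assert (Hs : seq (10 ^ i) (10 ^ (i + 1) - 10 ^ i) = seq (10 * p) (10 * (10 ^ i - p))).
    { rewrite Nat.pow_add_r, Hpi. f_equal. simpl (10 ^ 1)%nat. lia. }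
    rewrite Hs, seq_flat, sumR_flat_map. apply sumR_ext_in. intros y _. rewrite sumR_map. reflexivity. }
  rewrite HLHS.
  set (coef := fun n : nat => (-1) ^ n * Binomial.C (j + n - 1) n / 10 ^ (j + n)).
  apply (is_series_ext (fun n => sumR (seq p (10 ^ i - p)) (fun y => sumR (seq 0 10) (fun d =>
      if inS d1 d2 (i + 1) K1 K2 (10 * y + d) then coef n * (INR d ^ n * / INR y ^ (j + n)) else 0)))).
  2:{ apply is_series_sumR. intros y Hy. apply is_series_sumR. intros d Hd.
      apply in_seq in Hd. apply HY in Hy.
      destruct (inS d1 d2 (i + 1) K1 K2 (10 * y + d)).
      - apply termA; lia.
      - apply is_series_zero. }
  intro n.
  rewrite (sumR_ext_in _ (fun y =>
     (coef n * INR d1 ^ n) * (if inS d1 d2 i (K1 - 1) K2 y then / INR y ^ (j + n) else 0)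
   + (coef n * INR d2 ^ n) * (if inS d1 d2 i K1 (K2 - 1) y then / INR y ^ (j + n) else 0)
   + (coef n * other_digit_powsum d1 d2 n) * (if inS d1 d2 i K1 K2 y then / INR y ^ (j + n) else 0))).
  2:{ intros y Hy. apply HY in Hy.
      assert (Hy' : (10 ^ (i - 1) <= y < 10 ^ i)%nat) by (unfold p in Hy; exact Hy).
      rewrite (digits_split d1 d2) by assumption.
      rewrite (inS_step d1 d2 i K1 K2 y d1), (inS_step d1 d2 i K1 K2 y d2) by assumption.
      rewrite !Nat.eqb_refl.
      assert (E12 : Nat.eqb d1 d2 = false) by (apply Nat.eqb_neq; exact Hne).
      assert (E21 : Nat.eqb d2 d1 = false) by (apply Nat.eqb_neq; auto).
      rewrite E12, E21. simpl Z.of_nat. rewrite !Z.sub_0_r.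
      rewrite (sumR_ext_in _ (fun d => if inS d1 d2 i K1 K2 y then coef n * (INR d ^ n * / INR y ^ (j + n)) else 0)).
      2:{ intros d Hd. apply filter_In in Hd. destruct Hd as [Hd Hb].
          apply in_seq in Hd. apply andb_prop in Hb. destruct Hb as [Hb1 Hb2].
          apply negb_true_iff in Hb1, Hb2.
          rewrite inS_step by (auto; lia). rewrite Hb1, Hb2. simpl Z.of_nat. rewrite !Z.sub_0_r. reflexivity. }
      assert (HO : sumR (filter (fun d => negb (Nat.eqb d d1) && negb (Nat.eqb d d2)) (seq 0 10))
                (fun d => if inS d1 d2 i K1 K2 y then coef n * (INR d ^ n * / INR y ^ (j + n)) else 0)
              = coef n * other_digit_powsum d1 d2 n * (if inS d1 d2 i K1 K2 y then / INR y ^ (j + n) else 0)).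
      { destruct (inS d1 d2 i K1 K2 y).
        - rewrite (sumR_ext_in _ (fun d => (coef n * / INR y ^ (j + n)) * INR d ^ n)) by (intros; ring).
          rewrite sumR_scal. unfold other_digit_powsum. fold (sumR (filter (fun d => negb (Nat.eqb d d1) && negb (Nat.eqb d d2)) (seq 0 10)) (fun d => INR d ^ n)). ring.
        - rewrite sumR_zero. ring. }
      rewrite HO.
      destruct (inS d1 d2 i (K1 - 1) K2 y); destruct (inS d1 d2 i K1 (K2 - 1) y); ring. }
  rewrite sumR_lin3.
  unfold t, S_list. rewrite !sumR_filter. fold p. unfold coef. match goal with |- ?a = ?b => change (@eq R a b) end. ring.
Qed.
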